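(* Let $k\ge 2$ be an integer and let $H=(V,\mathcal E)$ be a finite hypergraph that is hereditarily $k$-colorable. Set $\lambda := \frac{k}{k-1}$. Let $\mathcal L=\{L_v\}_{v\in V}$ be a family of finite sets of positive integers such that $\sum_{v\in V}\lambda^{-|L_v|} < 1$. Then $H$ admits a unique-maximum coloring from $\mathcal L$, i.e., there is a unique-maximum coloring $C$ of $H$ with $C(v)\in L_v$ for every $v\in V$.
   Context: A hypergraph $H=(V,\mathcal E)$ has finite vertex set $V$ and a family $\mathcal E$ of nonempty subsets of $V$ (hyperedges). A coloring $C\colon V\to\mathbb Z_{>0}$ is proper if every hyperedge with at least two vertices is non-monochromatic. It is a unique-maximum coloring if for every $S\in\mathcal E$, the maximum color $\max_{v\in S}C(v)$ is attained by exactly one vertex of $S$. For $V'\subseteq V$, the induced sub-hypergraph is $H[V']=(V',\{S\cap V' : S\in\mathcal E\})$. $H$ is hereditarily $k$-colorable if for every $V'\subseteq V$, $H[V']$ admits a proper coloring with at most $k$ colors. Given a family $\mathcal L=\{L_v\}_{v\in V}$ of sets of positive integers, $H$ admits a (unique-maximum) coloring from $\mathcal L$ if there is such a coloring with $C(v)\in L_v$ for all $v$. *)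

(* Defs.v *)
From mathcomp Require Import all_boot all_order all_algebra.
Set Implicit Arguments. Unset Strict Implicit. Unset Printing Implicit Defensive.

Definition hyperedges_nonempty (V : finType) (E : {set {set V}}) : Prop :=
  forall S, S \in E -> S != set0.

Definition proper_k_coloring_on (V : finType) (E : {set {set V}}) (W : {set V})
  (k : nat) (C : V -> nat) : Prop :=
  (forall v, v \in W -> 1 <= C v <= k) /\
  (forall S, S \in E -> 2 <= #|S :&: W| ->
     exists u v, [/\ u \in S :&: W, v \in S :&: W & C u != C v]).

Definition hereditarily_colorable (V : finType) (E : {set {set V}}) (k : nat) : Prop :=
  forall W : {set V}, exists C : V -> nat, proper_k_coloring_on E W k C.

Definition unique_max_coloring (V : finType) (E : {set {set V}}) (C : V -> nat) : Prop :=
  (forall v, 0 < C v) /\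
  (forall S, S \in E ->
     exists2 u, u \in S &
       (forall w, w \in S -> w != u -> C w < C u)).

(* Main.v *)
Require Import Defs.
From mathcomp Require Import all_boot all_order all_algebra.
Import Order.TTheory GRing.Theory Num.Theory.

Lemma weight_pos {V : finType} {q : rat} {W : {set V}} {L : V -> seq nat} :
  (0 < q)%R -> (\sum_(v in W) q ^+ size (L v) < 1)%R ->
  forall v, v \in W -> 0 < size (L v).
Proof.
move=> q0 Hs v vW; rewrite lt0n; apply/negP => /eqP sz0.
move: Hs; rewrite (bigD1 v) //= sz0 expr0 -[X in (_ < X)%R]addr0 ltrD2l ltNge.
by rewrite sumr_ge0 // => i _; rewrite exprn_ge0 // ltW.
Qed.

Lemma main (V : finType) (E : {set {set V}}) (k : nat) (q : rat) :
  0 < k -> hereditarily_colorable E k -> (0 < q)%R -> (k%:R * (1 - q) <= 1)%R ->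
  forall n (W : {set V}) (L : V -> seq nat),
  \sum_(v in W) size (L v) <= n ->
  (forall v, uniq (L v)) ->
  (\sum_(v in W) q ^+ size (L v) < 1)%R ->
  exists C : V -> nat, (forall v, v \in W -> C v \in L v) /\
    (forall S, S \in E -> S :&: W != set0 ->
       exists2 u, u \in S :&: W & forall w, w \in S :&: W -> w != u -> C w < C u).
Proof.
case: k => // k _ Hhc q0 Hkq n; elim: n => [|n IH] W L Hm Hu Hs.
  case: (set_0Vmem W) => [->|[v0 v0W]].
    by exists (fun _ => 0); split=> [v|S _]; rewrite ?inE // setI0 eqxx.
  have := weight_pos q0 Hs _ v0W.
  by move: Hm; rewrite (bigD1 v0) //= leqn0 addn_eq0 => /andP[/eqP->].
case: (set_0Vmem W) => [->|[v0 v0W]].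
  by exists (fun _ => 0); split=> [v|S _]; rewrite ?inE // setI0 eqxx.
have Hne := weight_pos q0 Hs.
have exc : exists c, [exists v in W, c \in L v].
  move: (Hne _ v0W); case E0: (L v0) => [|x s] // _.
  by exists x; apply/existsP; exists v0; rewrite v0W E0 mem_head.
case: (ex_minnP exc) => c /existsP[u0 /andP[u0W cu0]] Hmin.
have cmin : forall v x, v \in W -> x \in L v -> c <= x.
  by move=> v x vW xL; apply: Hmin; apply/existsP; exists v; rewrite vW.
pose U := [set v in W | c \in L v].
have [Cu [Hrange Hedge]] := Hhc U.
pose X (i : 'I_k.+1) := [set v in U | Cu v == i.+1].
pose f v := (q ^+ size (L v))%R.
have [i Hi] : exists i : 'I_k.+1, (\sum_(v in U) f v <= k.+1%:R * \sum_(v in X i) f v)%R.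
  have HU : (\sum_(v in U) f v = \sum_(j < k.+1) \sum_(v in X j) f v)%R.
    rewrite (partition_big (fun v => inord (Cu v).-1 : 'I_k.+1) predT) //.
    apply: eq_bigr => j _; apply: eq_bigl => v; rewrite [in RHS]inE.
    case vU: (v \in U) => //=.
    have /andP[r1 r2] := Hrange v vU.
    rewrite -val_eqE /= inordK; last by rewrite prednK.
    by case: (Cu v) r1 => // m _ /=.
  case/boolP: [exists i : 'I_k.+1, (\sum_(v in U) f v <= k.+1%:R * \sum_(v in X i) f v)%R] => [/existsP [i Hi]|/existsPn H].
    by exists i.
  exfalso.
  have: (\sum_(j < k.+1) k.+1%:R * \sum_(v in X j) f v < \sum_(j < k.+1) \sum_(v in U) f v)%R.
    apply: ltr_sum; first by apply/hasP; exists ord0; rewrite ?mem_index_enum.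
    by move=> j _; rewrite ltNge H.
  by rewrite -mulr_sumr -HU sumr_const card_ord mulr_natl ltxx.
pose Xi := X i. pose W' := W :\: Xi. pose L' v := rem c (L v).
have memU : forall v, (v \in U) = (v \in W) && (c \in L v) by move=> v; rewrite inE.
have memX : forall v, (v \in Xi) = [&& v \in W, c \in L v & Cu v == i.+1].
  by move=> v; rewrite /Xi /X inE memU andbA.
have memW' : forall v, (v \in W') = (v \notin Xi) && (v \in W) by move=> v; rewrite in_setD.
have XU : Xi \subset U by apply/subsetP => v; rewrite memX memU => /and3P[-> ->].
have UW : U \subset W by apply/subsetP => v; rewrite memU => /andP[].
have szle : forall v, size (L' v) <= size (L v).
  move=> v; rewrite /L'; case cv: (c \in L v); first by rewrite size_rem // leq_pred.
  by rewrite rem_id // cv.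
have Hm' : \sum_(v in W') size (L' v) <= n.
  have -> : \sum_(v in W') size (L' v) = \sum_(v in W) (if v \in Xi then 0 else size (L' v)).
    rewrite big_mkcond [RHS]big_mkcond; apply: eq_bigr => v _.
    by rewrite memW'; case: (v \in Xi); case: (v \in W).
  rewrite -ltnS; apply: leq_trans Hm.
  rewrite (bigD1 u0) //= [X in _ < X](bigD1 u0) //= -addSn leq_add //.
    case: ifP => _; first exact: Hne.
    by rewrite /L' size_rem // prednK // Hne.
  by apply: leq_sum => v _; case: ifP.
have Hs' : (\sum_(v in W') q ^+ size (L' v) < 1)%R.
  apply: le_lt_trans Hs.
  rewrite (big_setID (A := W') U) (big_setID (A := W) U).
  have e1 : W' :&: U = U :\: Xi.
    by apply/setP => v; rewrite !(in_setI, in_setD) ?memW' memX memU; case: (v \in W); case: (c \in L v); case: (Cu v == _).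
  have e2 : W' :\: U = W :\: U.
    by apply/setP => v; rewrite !(in_setI, in_setD) ?memW' memX memU; case: (v \in W); case: (c \in L v); case: (Cu v == _).
  rewrite e1 e2 (setIidPr UW) (big_setID (A := U) Xi) (setIidPr XU).
  have e5 : (\sum_(v in W :\: U) q ^+ size (L' v) = \sum_(v in W :\: U) f v)%R.
    apply: eq_bigr => v; rewrite in_setD memU => /andP[H1 H2].
    by rewrite /L' rem_id //; move: H1; rewrite H2.
  have e6 : (q * \sum_(v in U :\: Xi) q ^+ size (L' v) = \sum_(v in U :\: Xi) f v)%R.
    rewrite mulr_sumr; apply: eq_bigr => v; rewrite in_setD memU => /andP[_ /andP[H1 H2]].
    by rewrite /L' size_rem // -exprS prednK // Hne.
  rewrite e5 lerD2r.
  move: Hi; rewrite (big_setID (A := U) Xi) (setIidPr XU).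
  set A := (\sum_(v in U :\: Xi) f v)%R; set B := (\sum_(v in Xi) f v)%R => Hi.
  rewrite -(ler_pM2l q0) e6.
  have BA0 : (0 <= B + A)%R.
    by rewrite addr_ge0 // sumr_ge0 // => v _; rewrite exprn_ge0 // ltW.
  have h : ((1 - q) * (B + A) <= B)%R.
    rewrite -(ler_pM2l (ltr0Sn _ k)) mulrA; apply: le_trans Hi.
    by rewrite -[X in (_ <= X)%R]mul1r ler_wpM2r.
  by move: h; rewrite mulrBl mul1r lerBlDr lerD2l.
have [C' [HC1 HC2]] := IH W' L' Hm' (fun v => rem_uniq c (Hu v)) Hs'.
exists (fun v => if v \in Xi then c else C' v); split.
  move=> v vW; case: ifP => vX.
    by move: vX; rewrite memX => /and3P[].
  by apply: (@mem_rem _ c); apply: HC1; rewrite memW' vX.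
move=> S SE SWne.
case: (set_0Vmem (S :&: W')) => [S0 | [u uSW']].
  have inX : forall x, x \in S :&: W -> x \in Xi.
    move=> x; rewrite in_setI => /andP[xS xW]; case xX: (x \in Xi) => //.
    by have := in_set0 x; rewrite -S0 in_setI xS memW' xX xW.
  case/set0Pn: SWne => u uSW; exists u; first by [].
  move=> w wSW wu; exfalso.
  have : 1 < #|S :&: U|.
    apply/card_gt1P; exists u, w; rewrite !in_setI.
    move: uSW wSW (inX _ uSW) (inX _ wSW); rewrite !memX !in_setI !memU.
    by move=> /andP[-> _] /andP[-> _] /and3P[-> -> _] /and3P[-> -> _]; rewrite eq_sym.
  case/(Hedge S SE) => a [b [aS bS]]; apply/negP; rewrite negbK.
  have hX : forall x, x \in S :&: U -> Cu x == i.+1.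
    move=> x; rewrite in_setI memU => /andP[xS /andP[xW _]].
    by have := inX x; rewrite in_setI xS xW memX => /(_ isT) /and3P[].
  by rewrite (eqP (hX a aS)) (eqP (hX b bS)).
have ne : S :&: W' != set0 by apply/set0Pn; exists u.
case: (HC2 S SE ne) => u' u'S Hu'.
have u'X : u' \notin Xi by move: u'S; rewrite in_setI memW' => /andP[_ /andP[]].
exists u'.
  by move: u'S; rewrite !in_setI memW' => /andP[-> /andP[_ ->]].
move=> w; rewrite in_setI => /andP[wS wW] wu'; rewrite (negbTE u'X).
case: ifP => wX.
  have u'W : u' \in W by move: u'S; rewrite in_setI memW' => /andP[_ /andP[]].
  have : C' u' \in L' u' by apply: HC1; move: u'S; rewrite in_setI => /andP[].
  rewrite /L' mem_rem_uniq // inE => /andP[ne' inL].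
  by rewrite ltn_neqAle eq_sym ne' /= (cmin u').
by apply: Hu' => //; rewrite in_setI wS memW' wX wW.
Qed.

Theorem theorem2p4 (k : nat) (V : finType) (E : {set {set V}}) (L : V -> seq nat) :
  2 <= k ->
  hyperedges_nonempty E ->
  hereditarily_colorable E k ->
  (forall v, uniq (L v) /\ all (fun c => 0 < c) (L v)) ->
  (\sum_(v : V) ((k%:R / (k.-1)%:R) ^- (size (L v)) : rat) < 1)%R ->
  exists C : V -> nat, unique_max_coloring E C /\ (forall v, C v \in L v).
Proof.
move=> k2 Hne Hhc HL Hs.
pose q : rat := ((k.-1)%:R / k%:R)%R.
have km : k = (k.-1).+1 by rewrite prednK // ltnW.
have k0 : (k%:R != 0 :> rat)%R by rewrite pnatr_eq0 -lt0n ltnW.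
have k10 : ((k.-1)%:R != 0 :> rat)%R by rewrite pnatr_eq0 -lt0n -ltnS -km.
have q0 : (0 < q)%R by rewrite divr_gt0 // ltr0n lt0n ?(pnatr_eq0 rat) // -(pnatr_eq0 rat).
have Hkq : (k%:R * (1 - q) <= 1)%R.
  rewrite mulrBr mulr1 /q mulrC divfK // {1}km -natr1 addrAC subrr add0r.
  by [].
have Hs' : (\sum_(v in [set: V]) q ^+ size (L v) < 1)%R.
  move: Hs; rewrite (eq_bigl (fun v => v \in [set: V])); last by move=> v; rewrite inE.
  by rewrite /q -invf_div; under eq_bigr do rewrite exprVn invrK.
have [C [HC1 HC2]] := @main V E k q (ltnW k2) Hhc q0 Hkq _ [set: V] L (leqnn _) (fun v => proj1 (HL v)) Hs'.
have CL : forall v, C v \in L v by move=> v; apply: HC1; rewrite inE.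
exists C; split => //; split.
  by move=> v; have /allP := proj2 (HL v); apply; apply: CL.
move=> S SE; have := HC2 S SE; rewrite setIT => /(_ (Hne S SE)) [u uS Hu].
by exists u.
Qed.
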